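(* Let $(R,\mathfrak m)$ be a regular local ring with $\dim R\ge 2$, let $\{(R_i,\mathfrak m_i)\}_{i\ge 0}$ be an infinite sequence of local quadratic transforms with $R_0=R$, and let $S=\bigcup_{i\ge0}R_i$. Then $S$ is a DVR if and only if the maximal ideal of $S$ is principal and $S$ is dominated by a rank $1$ valuation ring.
   Context: A local quadratic transform of a regular local ring $(A,\mathfrak n)$ is a local ring $A[\mathfrak n/x]_{\mathfrak q}$ with $x\in\mathfrak n\setminus\mathfrak n^2$ and $\mathfrak q$ a prime ideal of $A[\mathfrak n/x]$ containing $\mathfrak n$. The sequence satisfies: for each $i\ge 0$, $R_{i+1}$ is a local quadratic transform of $R_i$, $R_i\subsetneq R_{i+1}$, and each $R_i$ is a regular local ring of dimension at least $2$ with maximal ideal $\mathfrak m_i$. $S$ is a local domain with maximal ideal $N=\bigcup_i\mathfrak m_i$; a valuation ring $U$ with maximal ideal $\mathfrak M_U$ dominates $S$ if $S\subseteq U$ and $\mathfrak M_U\cap S=N$. *)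

(* Defs.v *)
(* All rings in the statement are subrings of one fixed field K
   (the fraction field of R = R_0); subsets of K are modelled as K -> Prop. *)
From mathcomp Require Import all_boot all_order all_algebra.
Set Implicit Arguments. Unset Strict Implicit. Unset Printing Implicit Defensive.
Import GRing.Theory.
Local Open Scope ring_scope.

Section Defs.
Variable K : fieldType.
Implicit Types (A B I P U X : K -> Prop).

Definition ksubset A B := forall x, A x -> B x.
Definition keqset A B := forall x, A x <-> B x.

Definition subring A :=
  [/\ A 0, A 1, (forall x y, A x -> A y -> A (x - y))
    & (forall x y, A x -> A y -> A (x * y))].

Definition ideal A I :=
  [/\ ksubset I A, I 0, (forall x y, I x -> I y -> I (x + y))
    & (forall a x, A a -> I x -> I (a * x))].

(* non-units of A; for a local ring this is its maximal ideal *)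
Definition nonunits A x := A x /\ ~ (exists y, A y /\ x * y = 1).

Definition local_ring A := subring A /\ ideal A (nonunits A).

Definition prime_ideal A P :=
  [/\ ideal A P, ~ P 1
    & forall a b, A a -> A b -> P (a * b) -> P a \/ P b].

Definition ideal_gen A (s : seq K) x :=
  exists c : seq K, [/\ size c = size s, (forall i, (i < size c)%N -> A c`_i)
                      & x = \sum_(i < size s) c`_i * s`_i].

Definition noetherian A :=
  forall I, ideal A I -> exists s : seq K, keqset I (ideal_gen A s).

Definition prime_chain A (n : nat) :=
  exists P : nat -> K -> Prop,
    (forall i, (i <= n)%N -> prime_ideal A (P i)) /\
    (forall i, (i < n)%N -> ksubset (P i) (P i.+1) /\ ~ ksubset (P i.+1) (P i)).

Definition krull_dim A (d : nat) := prime_chain A d /\ ~ prime_chain A d.+1.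

Definition regular_local A :=
  [/\ local_ring A, noetherian A
    & exists d, krull_dim A d /\
        exists s : seq K, size s = d /\ keqset (nonunits A) (ideal_gen A s)].

Definition sq_ideal I x :=
  exists s : seq (K * K), (forall p, p \in s -> I p.1 /\ I p.2) /\
                          x = \sum_(p <- s) p.1 * p.2.

Definition adjoin A X z :=
  forall B, subring B -> ksubset A B -> ksubset X B -> B z.

Definition blowup A (x : K) :=
  adjoin A (fun z => exists y, nonunits A y /\ z = y / x).

Definition localize B (q : K -> Prop) z :=
  exists b c, [/\ B b, B c, ~ q c & z = b / c].

Definition local_quadratic_transform A B :=
  exists x, [/\ nonunits A x, ~ sq_ideal (nonunits A) x &
    exists q, [/\ prime_ideal (blowup A x) q, ksubset (nonunits A) q
                & keqset B (localize (blowup A x) q)]].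

Definition frac_field_is_K A :=
  forall z, exists a b, [/\ A a, A b, b != 0 & z = a / b].

Definition union_seq (Rs : nat -> K -> Prop) z := exists i, Rs i z.

Definition principal_ideal A I :=
  exists t, A t /\ keqset I (fun z => exists a, A a /\ z = a * t).

Definition DVR A :=
  exists v : K -> int,
    [/\ (forall x y, x != 0 -> y != 0 -> v (x * y) = v x + v y),
        (forall x y, x != 0 -> y != 0 -> x + y != 0 ->
                     (v x <= v (x + y)) \/ (v y <= v (x + y))),
        (forall n : int, exists x, x != 0 /\ v x = n)
      & keqset A (fun z => z = 0 \/ (z != 0 /\ 0 <= v z))].

Definition valuation_ring U :=
  subring U /\ forall z, z != 0 -> U z \/ U z^-1.

Definition dominates U A :=
  ksubset A U /\ keqset (fun z => A z /\ nonunits U z) (nonunits A).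

End Defs.

(* Main.v *)
Require Import Defs.
From mathcomp Require Import all_boot all_order all_algebra.
From mathcomp Require Import zify ring.
From Stdlib Require Import Classical ClassicalEpsilon.
Set Implicit Arguments. Unset Strict Implicit. Unset Printing Implicit Defensive.
Import GRing.Theory.
Local Open Scope ring_scope.
Import Order.TTheory Num.Theory.

Section Gen.
Variable K : fieldType.
Implicit Types (A : K -> Prop).

Lemma sr0 A : subring A -> A 0. Proof. by case. Qed.
Lemma sr1 A : subring A -> A 1. Proof. by case. Qed.
Lemma srB A x y : subring A -> A x -> A y -> A (x - y). Proof. by case=> _ _ h _; apply: h. Qed.
Lemma srM A x y : subring A -> A x -> A y -> A (x * y). Proof. by case=> _ _ _ h; apply: h. Qed.
Lemma srN A x : subring A -> A x -> A (- x).
Proof. move=> h hx; rewrite -sub0r; apply: srB => //; exact: sr0. Qed.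
Lemma srD A x y : subring A -> A x -> A y -> A (x + y).
Proof. move=> h hx hy; rewrite -[y]opprK; apply: srB => //; exact: srN. Qed.
Lemma srX A x n : subring A -> A x -> A (x ^+ n).
Proof. move=> h hx; elim: n => [|n IH]; first by rewrite expr0; exact: sr1.
by rewrite exprS; apply: srM. Qed.

End Gen.

Section Gen2.
Variable K : fieldType.
Implicit Types (A U P : K -> Prop).

Lemma zero_prime A : subring A -> prime_ideal A (fun z => z = 0).
Proof.
move=> hA; split.
- split => //.
  + by move=> x ->; exact: sr0.
  + by move=> x y -> ->; rewrite addr0.
  + by move=> a x _ ->; rewrite mulr0.
- by move/eqP; rewrite oner_eq0.
- by move=> a b _ _ /eqP; rewrite mulf_eq0 => /orP [] /eqP; [left|right].
Qed.

Lemma val_nonunits_prime U : valuation_ring U -> prime_ideal U (nonunits U).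
Proof.
move=> [hU hv]; split.
- split.
  + by move=> x [].
  + split; first exact: sr0.
    by case=> y [_]; rewrite mul0r => /eqP; rewrite eq_sym oner_eq0.
  + move=> x y [hx nx] [hy ny]; split; first exact: srD.
    have [->|x0] := eqVneq x 0; first by rewrite add0r.
    have [->|y0] := eqVneq y 0; first by rewrite addr0.
    case=> z [hz e].
    have [h|h] := hv (x / y) (mulf_neq0 x0 (invr_neq0 y0)).
    * apply: ny; exists ((1 + x / y) * z); split.
        by apply: srM => //; apply: srD => //; exact: sr1.
      by rewrite mulrA mulrDr mulr1 [y * _]mulrC divfK // addrC.
    * rewrite invfM invrK mulrC in h.
      apply: nx; exists ((1 + y / x) * z); split.
        by apply: srM => //; apply: srD => //; exact: sr1.
      by rewrite mulrA mulrDr mulr1 [x * _]mulrC divfK.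
  + move=> a x ha [hx nx]; split; first exact: srM.
    case=> z [hz e]; apply: nx; exists (a * z); split; first exact: srM.
    by rewrite mulrCA mulrA.
- case=> _; apply; exists 1; split; [exact: sr1|exact: mulr1].
- move=> a b ha hb [_ nab]; apply: NNPP => H.
  have na : exists y, U y /\ a * y = 1 by apply: NNPP => nn; apply: H; left.
  have nb : exists y, U y /\ b * y = 1 by apply: NNPP => nn; apply: H; right.
  case: na => y [hy ey]; case: nb => z [hz ez]; apply: nab.
  exists (y * z); split; first exact: srM.
  by rewrite mulrACA ey ez mulr1.
Qed.

Lemma prime_nonunit A P x : subring A -> prime_ideal A P -> P x -> nonunits A x.
Proof.
move=> hA [[hs h0 hd hm] n1 _] hx; split; first exact: hs.
case=> y [hy e]; apply: n1; rewrite -e mulrC; exact: hm.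
Qed.

Lemma prime_pow A P y n : prime_ideal A P -> subring A -> A y -> P (y ^+ n.+1) -> P y.
Proof.
move=> hP hA hy; elim: n => [|n IH]; first by rewrite expr1.
rewrite exprS => h; case: hP => _ _ hp.
by case: (hp _ _ hy (srX n.+1 hA hy) h) => // /IH.
Qed.

End Gen2.

Section Fwd.
Variable K : fieldType.
Variable A : K -> Prop.
Variable v : K -> int.
Hypothesis vM : forall x y, x != 0 -> y != 0 -> v (x * y) = v x + v y.
Hypothesis vU : forall x y, x != 0 -> y != 0 -> x + y != 0 ->
                     (v x <= v (x + y)) \/ (v y <= v (x + y)).
Hypothesis vS : forall n : int, exists x, x != 0 /\ v x = n.
Hypothesis vA : keqset A (fun z => z = 0 \/ (z != 0 /\ 0 <= v z)).

Lemma v1 : v 1 = 0.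
Proof. have h1 : (1:K) != 0 := oner_neq0 K. have := vM h1 h1; rewrite mulr1; lia. Qed.

Lemma vN1 : v (-1) = 0.
Proof.
have h : (-1 : K) != 0 by rewrite oppr_eq0 oner_neq0.
have := vM h h; rewrite mulrNN mulr1 v1; lia.
Qed.

Lemma vN x : x != 0 -> v (- x) = v x.
Proof.
move=> x0; have h : (-1 : K) != 0 by rewrite oppr_eq0 oner_neq0.
by rewrite -mulN1r vM // vN1 add0r.
Qed.

Lemma vV x : x != 0 -> v x^-1 = - v x.
Proof.
move=> x0; have := vM x0 (invr_neq0 x0); rewrite divff // v1; lia.
Qed.

Lemma Ain x : A x <-> x = 0 \/ (x != 0 /\ 0 <= v x).
Proof. exact: vA. Qed.

Lemma A_sub : subring A.
Proof.
split.
- by apply/Ain; left.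
- by apply/Ain; right; rewrite v1 oner_neq0.
- move=> x y /Ain hx /Ain hy; apply/Ain.
  have [->|e0] := eqVneq (x - y) 0; first by left.
  right; split => //.
  have [x0|x0] := eqVneq x 0.
    rewrite x0 sub0r vN; last by move: e0; rewrite x0 sub0r oppr_eq0.
    case: hy => [y0|[]//]; by move: e0; rewrite x0 y0 subrr eqxx.
  have [y0|y0] := eqVneq y 0.
    by move: hx; rewrite y0 subr0 => -[|[]//]; move/eqP; rewrite (negbTE x0).
  case: hx => [/eqP|[_ hx]]; first by rewrite (negbTE x0).
  case: hy => [/eqP|[_ hy]]; first by rewrite (negbTE y0).
  have ny0 : - y != 0 by rewrite oppr_eq0.
  case: (vU x0 ny0 e0) => h; first by apply: le_trans h.
  by rewrite vN // in h; apply: le_trans h.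
- move=> x y /Ain hx /Ain hy; apply/Ain.
  have [->|x0] := eqVneq x 0; first by left; rewrite mul0r.
  have [->|y0] := eqVneq y 0; first by left; rewrite mulr0.
  case: hx => [/eqP|[_ hx]]; first by rewrite (negbTE x0).
  case: hy => [/eqP|[_ hy]]; first by rewrite (negbTE y0).
  right; split; first by rewrite mulf_neq0.
  rewrite vM //; exact: addr_ge0.
Qed.

Lemma A_val : valuation_ring A.
Proof.
split; first exact: A_sub.
move=> z z0; have [h|h] := lerP 0 (v z).
  by left; apply/Ain; right.
right; apply/Ain; right; split; first by rewrite invr_neq0.
rewrite vV //; rewrite oppr_ge0; exact: ltW.
Qed.

Lemma nonunitsA x : nonunits A x <-> x = 0 \/ (x != 0 /\ 0 < v x).
Proof.
split.
- move=> [/Ain hx nx]; case: hx => [->|[x0 hx]]; first by left.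
  right; split => //; rewrite lt_def hx andbT; apply/negP => /eqP e.
  apply: nx; exists x^-1; split; last by rewrite divff.
  apply/Ain; right; split; first by rewrite invr_neq0.
  by rewrite vV // e oppr0.
- case=> [->|[x0 hx]].
    split; first by apply/Ain; left.
    by case=> y [_]; rewrite mul0r => /eqP; rewrite eq_sym oner_eq0.
  split; first by apply/Ain; right; split => //; exact: ltW.
  case=> y [/Ain hy e].
  have y0 : y != 0 by apply/eqP => y0; move: e; rewrite y0 mulr0 => /eqP; rewrite eq_sym oner_eq0.
  case: hy => [/eqP|[_ hy]]; first by rewrite (negbTE y0).
  have := vM x0 y0; rewrite e v1; lia.
Qed.

Lemma fwd_principal : principal_ideal A (nonunits A).
Proof.
case: (vS 1) => t [t0 vt]; exists t; split.
  by apply/Ain; right; rewrite vt.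
move=> z; split.
- move/nonunitsA => [->|[z0 hz]].
    exists 0; split; [by apply/Ain; left|by rewrite mul0r].
  exists (z / t); split; last by rewrite divfK.
  apply/Ain; right; split; first by rewrite mulf_neq0 // invr_neq0.
  rewrite vM ?invr_neq0 // vV // vt; lia.
- case=> a [/Ain ha ->]; apply/nonunitsA.
  case: ha => [->|[a0 ha]]; first by left; rewrite mul0r.
  right; split; first by rewrite mulf_neq0.
  rewrite vM // vt; lia.
Qed.

Lemma fwd_dim : krull_dim A 1.
Proof.
split.
- exists (fun i => if i is 0%N then (fun z => z = 0) else nonunits A); split.
    case=> [|[|]] //= _; [exact: zero_prime A_sub|exact: val_nonunits_prime A_val].
  case=> //= _; split.
    by move=> x ->; apply/nonunitsA; left.
  case: (vS 1) => t [t0 vt] h.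
  have: nonunits A t by apply/nonunitsA; right; rewrite vt.
  by move/h/eqP; rewrite (negbTE t0).
- case=> P [hp hc].
  have [s10 n10] := hc 0%N isT.
  have [s21 n21] := hc 1%N isT.
  have [x [x1 nx0]] : exists x, P 1%N x /\ ~ P 0%N x.
    by apply: NNPP => H; apply: n10 => x h; apply: NNPP => h'; apply: H; exists x.
  have [y [y2 ny1]] : exists y, P 2%N y /\ ~ P 1%N y.
    by apply: NNPP => H; apply: n21 => y h; apply: NNPP => h'; apply: H; exists y.
  have P0 := hp 0%N isT; have P1 := hp 1%N isT; have P2 := hp 2%N isT.
  have x0 : x != 0.
    by apply/eqP => e; apply: nx0; rewrite e; case: P0 => -[].
  have /nonunitsA hy := prime_nonunit A_sub P2 y2.
  have hx := prime_nonunit A_sub P1 x1.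
  case: hy => [y0|[y0 vy]].
    by apply: ny1; rewrite y0; case: P1 => -[].
  case: hx => /Ain [e|[_ vx]] _; first by rewrite e eqxx in x0.
  pose n := `|v x|%N.
  have vxn : v x = n%:Z by rewrite /n gez0_abs.
  apply: ny1; apply: (prime_pow (n := n) P1 A_sub); first exact: (proj1 (prime_nonunit A_sub P2 y2)).
  have yn0 : y ^+ n.+1 != 0 by rewrite expf_neq0.
  have -> : y ^+ n.+1 = (y ^+ n.+1 / x) * x by rewrite divfK.
  case: P1 => -[_ _ _ hm] _ _; apply: hm => //.
  apply/Ain; right; split; first by rewrite mulf_neq0 // invr_neq0.
  rewrite vM ?invr_neq0 // vV // vxn.
  have vyn : forall k, v (y ^+ k.+1) >= k.+1%:Z.
    elim=> [|k IH]; first by rewrite expr1; lia.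
    rewrite exprS vM ?expf_neq0 //; lia.
  have := vyn n; lia.
Qed.

End Fwd.

Section Bwd.
Variable K : fieldType.
Variable Rs : nat -> K -> Prop.
Hypothesis hfrac : frac_field_is_K (Rs 0%N).
Hypothesis hsub : forall i, subring (Rs i).
Hypothesis hmono : forall i, ksubset (Rs i) (Rs i.+1).
Notation S := (union_seq Rs).

Lemma mono_le i j : (i <= j)%N -> ksubset (Rs i) (Rs j).
Proof.
move=> /subnK <-; elim: (j - i)%N => [|k IH] x hx //.
by rewrite addSn; apply: hmono; apply: IH.
Qed.

Lemma S_sub : subring S.
Proof.
have lift2 : forall x y, S x -> S y -> exists i, Rs i x /\ Rs i y.
  move=> x y [i hx] [j hy]; exists (maxn i j); split.
    by apply: (mono_le (leq_maxl i j)).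
  by apply: (mono_le (leq_maxr i j)).
split.
- by exists 0%N; exact: sr0.
- by exists 0%N; exact: sr1.
- move=> x y hx hy; case: (lift2 _ _ hx hy) => i [? ?]; exists i; exact: srB.
- move=> x y hx hy; case: (lift2 _ _ hx hy) => i [? ?]; exists i; exact: srM.
Qed.

Lemma S_frac z : exists a b, [/\ S a, S b, b != 0 & z = a / b].
Proof.
case: (hfrac z) => a [b [ha hb b0 ->]]; exists a, b; split => //; by exists 0%N.
Qed.

Variables (t : K) (U : K -> Prop).
Hypothesis ht : S t.
Hypothesis hN : keqset (nonunits S) (fun z => exists a, S a /\ z = a * t).
Hypothesis hU : valuation_ring U.
Hypothesis hdim : krull_dim U 1.
Hypothesis hdom : dominates U S.

Lemma tN : nonunits S t.
Proof. apply/hN; exists 1; split; [exact: sr1 S_sub| by rewrite mul1r]. Qed.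

Lemma SU : ksubset S U. Proof. by case: hdom. Qed.

Lemma tU : nonunits U t.
Proof. by case: hdom => _ h; case: (proj2 (h t) tN). Qed.

Lemma hUs : subring U. Proof. by case: hU. Qed.

Lemma unitS x : S x -> ~ nonunits S x -> exists y, S y /\ x * y = 1.
Proof. by move=> hx nx; apply: NNPP => H; apply: nx; split. Qed.

Lemma t0 : t != 0.
Proof.
apply/eqP => e.
have allS : forall z, S z.
  move=> z; case: (S_frac z) => a [b [ha hb b0 ->]].
  have nb : ~ nonunits S b.
    by move/hN => [a' [_ eb]]; move: b0; rewrite eb e mulr0 eqxx.
  case: (unitS hb nb) => y [hy ey].
  have -> : a / b = a * y by rewrite -[b^-1]mulr1 -ey mulKf.
  exact: srM S_sub ha hy.
have allU : forall z, U z by move=> z; apply: SU.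
case: hdim => [[P [hp hc]] _].
case: (hc 0%N isT) => _ n10.
have [p [p1 np0]] : exists p, P 1%N p /\ ~ P 0%N p.
  by apply: NNPP => H; apply: n10 => x h; apply: NNPP => h'; apply: H; exists x.
have p0 : p != 0 by apply/eqP => e0; apply: np0; rewrite e0; case: (hp 0%N isT) => -[].
case: (hp 1%N isT) => -[_ _ _ hm] n1 _; apply: n1.
by rewrite -(mulVf p0); apply: hm.
Qed.

Definition Pd z := U z /\ forall n, exists a, U a /\ z = t ^+ n * a.

Lemma tn0 n : t ^+ n != 0. Proof. exact: expf_neq0 t0. Qed.

Lemma Pd_prime : prime_ideal U Pd.
Proof.
have sU := hUs.
split.
- split.
  + by move=> z [].
  + split; first exact: sr0.
    by move=> n; exists 0; split; [exact: sr0|rewrite mulr0].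
  + move=> x y [hx px] [hy py]; split; first exact: srD.
    move=> n; case: (px n) => a [ha ->]; case: (py n) => b [hb ->].
    by exists (a + b); split; [exact: srD|rewrite mulrDr].
  + move=> c x hc [hx px]; split; first exact: srM.
    move=> n; case: (px n) => a [ha ->].
    by exists (c * a); split; [exact: srM|rewrite mulrCA].
- case=> _ /(_ 1%N) [a [ha e]]; case: tU => _; apply; exists a; split => //.
- move=> a b ha hb [hab pab]; apply: NNPP => H.
  have nd : forall c, U c -> ~ Pd c -> exists m d, [/\ U d, t ^+ m = c * d &
          ~ exists d', U d' /\ c = t ^+ m * d'].
    move=> c hc nc.
    have [m nm] : exists m, ~ exists d, U d /\ c = t ^+ m * d.
      apply: NNPP => H1; apply: nc; split => // n.
      by apply: NNPP => H2; apply: H1; exists n.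
    have c0 : c != 0.
      by apply/eqP => e; apply: nm; exists 0; split; [exact: sr0|rewrite e mulr0].
    case: hU => _ /(_ (c / t ^+ m)); case.
    + by rewrite mulf_neq0 // invr_neq0 // tn0.
    + by move=> h; exfalso; apply: nm; exists (c / t ^+ m); split => //; rewrite mulrC divfK // tn0.
    + rewrite invf_div => h; exists m, (t ^+ m / c); split => //.
      by rewrite mulrC divfK.
  have [m [c [hc ec nma]]] := nd a ha (fun h => H (or_introl h)).
  have [k [d [hd ed _]]] := nd b hb (fun h => H (or_intror h)).
  case: (pab (m + k)%N) => e [he ee].
  have ecd : e * c * d = 1.
    apply: (mulfI (tn0 (m + k))).
    have -> : t ^+ (m + k) * (e * c * d) = (t ^+ (m + k) * e) * c * d by ring.
    by rewrite -ee mulr1 exprD ec ed; ring.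
  apply: nma; exists (e * d); split; first exact: srM.
  rewrite -[a]mulr1 -ecd ec; ring.
Qed.
Lemma no_inf x : S x -> x != 0 -> exists n, ~ exists a, S a /\ x = t ^+ n * a.
Proof.
move=> hx x0; apply: NNPP => H.
have H' : forall n, exists a, S a /\ x = t ^+ n * a.
  by move=> n; apply: NNPP => H2; apply: H; exists n.
case: hdim => _; apply.
exists (fun i => match i with 0%N => (fun z => z = 0) | 1%N => Pd | _ => nonunits U end).
split.
  case=> [|[|[|]]] //= _; [exact: zero_prime hUs|exact: Pd_prime|exact: val_nonunits_prime].
case=> [|[|]] //= _; split.
- by move=> z ->; case: Pd_prime => -[].
- move=> h; have := h x; rewrite /= => /(_ _)/eqP; rewrite (negbTE x0) => hh; suff: false by []; apply: hh.
  split; first exact: SU.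
  by move=> n; case: (H' n) => a [ha ea]; exists a; split => //; exact: SU.
- move=> z [hz pz]; split => //; case: (pz 1%N) => a [ha ea] [y [hy ey]].
  case: tU => _; apply; exists (a * y); split; first exact: srM hUs ha hy.
  by rewrite mulrA -[t]expr1 -ea.
- move=> h; have [_ pt] := h t tU; case: (pt 2%N) => a [ha ea].
  case: tU => _; apply; exists a; split => //.
  apply: (mulfI t0); rewrite mulr1 mulrA -expr2; exact/esym.
Qed.

Lemma decomp x : S x -> x != 0 -> exists n u, [/\ S u, S u^-1 & x = t ^+ n * u].
Proof.
move=> hx x0; case: (no_inf hx x0) => n.
elim: n => [|n IH] H.
  by exfalso; apply: H; exists x; rewrite expr0 mul1r.
case: (classic (exists a, S a /\ x = t ^+ n * a)) => [[a [ha ea]]|]; last exact: IH.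
have na : ~ nonunits S a.
  move/hN => [b [hb eb]]; apply: H; exists b; split => //.
  by rewrite ea eb exprSr -mulrA [t * b]mulrC.
case: (unitS ha na) => y [hy ey].
exists n, a; split => //.
have a0 : a != 0 by apply/eqP => e; move: ey; rewrite e mul0r => /eqP; rewrite eq_sym oner_eq0.
by rewrite -[a^-1]mulr1 -ey mulKf.
Qed.
Definition Rep z (k : int) := exists u, [/\ u != 0, S u, S u^-1 & z = t ^ k * u].

Lemma t_pow_nonunit n : ~ S ((t ^+ n.+1)^-1).
Proof.
move=> h; case: tN => _; apply; exists (t ^+ n * (t ^+ n.+1)^-1); split.
  by apply: srM S_sub _ h; apply: srX S_sub ht.
by rewrite mulrA -exprS divff // tn0.
Qed.

Lemma Rep_uniq z k l : Rep z k -> Rep z l -> k = l.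
Proof.
move=> [u [u0 hu hu' ez]] [w [w0 hw hw' ew]].
have e : t ^ (k - l) = w / u.
  have : t ^ k * u = t ^ l * w by rewrite -ez -ew.
  move=> h; rewrite expfzDr ?t0 // -invr_expz.
  apply: (mulIf u0); rewrite divfK //. rewrite -mulrA [_^-1 * u]mulrC mulrA h.
  rewrite mulrC mulrA mulVf ?mul1r //. exact: expfz_neq0 t0.
case E: (k - l) e => [[|n]|n] e.
- by move: E; lia.
- exfalso; apply: (t_pow_nonunit (n := n)).
  have -> : (t ^+ n.+1)^-1 = u / w by rewrite exprnP e invf_div.
  exact: srM S_sub hu hw'.
- exfalso; apply: (t_pow_nonunit (n := n)).
  rewrite NegzE -exprnN in e; rewrite e; exact: srM S_sub hw hu'.
Qed.

Lemma Rep_nat x : S x -> x != 0 -> exists n : nat, Rep x n.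
Proof.
move=> hx x0; case: (decomp hx x0) => n [u [hu hu' ex]]; exists n, u; split => //.
  by apply/eqP => e; move: x0; rewrite ex e mulr0 eqxx.
Qed.

Lemma Rep_exists z : z != 0 -> exists k, Rep z k.
Proof.
move=> z0; case: (S_frac z) => a [b [ha hb b0 ez]].
have a0 : a != 0 by apply/eqP => e; move: z0; rewrite ez e mul0r eqxx.
case: (Rep_nat ha a0) => m [u [u0 hu hu' ea]].
case: (Rep_nat hb b0) => n [w [w0 hw hw' eb]].
exists (m%:Z - n%:Z), (u / w); split.
- by rewrite mulf_neq0 // invr_neq0.
- exact: srM S_sub hu hw'.
- by rewrite invf_div; exact: srM S_sub hw hu'.
- rewrite ez ea eb expfzDr ?t0 // -exprnN -!exprnP invfM; ring.
Qed.

Lemma Rep_mul x y k l : Rep x k -> Rep y l -> Rep (x * y) (k + l).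
Proof.
move=> [u [u0 hu hu' ex]] [w [w0 hw hw' ey]]; exists (u * w); split.
- by rewrite mulf_neq0.
- exact: srM S_sub hu hw.
- by rewrite invfM; exact: srM S_sub hu' hw'.
- by rewrite ex ey expfzDr ?t0 //; ring.
Qed.

Lemma Rep_S z k : Rep z k -> 0 <= k -> S z.
Proof.
move=> [u [u0 hu hu' ->]]; case: k => // n _.
by apply: srM S_sub _ hu; rewrite -exprnP; apply: srX S_sub ht.
Qed.
Definition vv z := epsilon (inhabits (0 : int)) (Rep z).

Lemma vv_spec z : z != 0 -> Rep z (vv z).
Proof. by move=> z0; apply: epsilon_spec; apply: Rep_exists. Qed.

Lemma Rep_neq0 z k : Rep z k -> z != 0.
Proof. by move=> [u [u0 _ _ ->]]; rewrite mulf_neq0 // expfz_neq0 // t0. Qed.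

Lemma vv_eq z k : Rep z k -> vv z = k.
Proof. move=> h; apply: Rep_uniq (vv_spec (Rep_neq0 h)) h. Qed.

Lemma Rep_pow (k : int) : Rep (t ^ k) k.
Proof.
exists 1; split; rewrite ?oner_neq0 ?invr1 ?mulr1 //; exact: sr1 S_sub.
Qed.

Lemma vU_aux x y : x != 0 -> y != 0 -> x + y != 0 -> vv x <= vv y -> vv x <= vv (x + y).
Proof.
move=> x0 y0 xy0 le.
case: (vv_spec x0) => u [u0 hu hu' ex].
case: (vv_spec y0) => w [w0 hw hw' ey].
have [m em] : exists m : nat, vv y - vv x = m%:Z.
  by exists `|vv y - vv x|%N; rewrite gez0_abs // subr_ge0.
set w' := u + t ^+ m * w.
have exy : x + y = t ^ vv x * w'.
  rewrite /w' {1}ex {1}ey exprnP -em mulrDr mulrA -expfzDr ?t0 //.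
  by congr (_ + _ * _); congr (_ ^ _); lia.
have hw'S : S w' by apply: srD S_sub hu _; apply: srM S_sub _ hw; apply: srX S_sub ht.
have w'0 : w' != 0 by apply/eqP => e; move: xy0; rewrite exy e mulr0 eqxx.
case: (Rep_nat hw'S w'0) => n hn.
rewrite (vv_eq (z := x + y) (k := vv x + n%:Z)); last by rewrite exy; apply: Rep_mul (Rep_pow _) hn.
by rewrite lerDl.
Qed.

Lemma bwd_DVR : DVR S.
Proof.
exists vv; split.
- move=> x y x0 y0; apply: vv_eq; exact: Rep_mul (vv_spec x0) (vv_spec y0).
- move=> x y x0 y0 xy0; case: (lerP (vv x) (vv y)) => h.
    by left; apply: vU_aux.
  right; rewrite addrC; apply: vU_aux => //; first by rewrite addrC.
  exact: ltW.
- move=> n; exists (t ^ n); split; first by rewrite expfz_neq0 // t0.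
  exact: vv_eq (Rep_pow n).
- move=> z; split.
  + move=> hz; have [->|z0] := eqVneq z 0; first by left.
    right; split => //; case: (Rep_nat hz z0) => n hn; by rewrite (vv_eq hn).
  + case=> [->|[z0 h]]; first exact: sr0 S_sub.
    exact: Rep_S (vv_spec z0) h.
Qed.
End Bwd.

Theorem corollary8p5 (K : fieldType) (Rs : nat -> K -> Prop) :
  frac_field_is_K (Rs 0%N) ->
  (forall i, regular_local (Rs i) /\
             exists d, krull_dim (Rs i) d /\ (2 <= d)%N) ->
  (forall i, ksubset (Rs i) (Rs i.+1) /\ ~ ksubset (Rs i.+1) (Rs i)) ->
  (forall i, local_quadratic_transform (Rs i) (Rs i.+1)) ->
  DVR (union_seq Rs) <->
  (principal_ideal (union_seq Rs) (nonunits (union_seq Rs)) /\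
   exists U : K -> Prop,
     [/\ valuation_ring U, krull_dim U 1 & dominates U (union_seq Rs)]).
Proof.
move=> hfrac hreg hchain _.
have hsub : forall i, subring (Rs i).
  by move=> i; case: (hreg i) => -[[hs _] _ _] _.
have hmono : forall i, ksubset (Rs i) (Rs i.+1) by move=> i; case: (hchain i).
split.
- case=> v [vM vU vS vA]; split; first exact: (fwd_principal vM vS vA).
  exists (union_seq Rs); split.
  + exact: (A_val vM vU vA).
  + exact: (fwd_dim vM vU vS vA).
  + split => // z; split; [by case|by move=> h; split => //; case: h].
- case=> -[t [ht hN]] [U [hU hdim hdom]].
  exact: (bwd_DVR hfrac hsub hmono ht hN hU hdim hdom).
Qed.
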